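(* Let $\{F_n\}$ be the Fibonacci sequence, $F_0=0$, $F_1=1$, $F_{n+2}=F_{n+1}+F_n$. Then \[ \{F_n\}=\sum_{k=0}^{\infty} I_0^{\,k+1}\{a_n[x^k/k!]\}_L , \] where the sum is taken termwise (for each index only finitely many summands are nonzero).
   Context: Sequences are indexed by $n=0,1,2,\dots$; sums of sequences are termwise. The insertion operator is $I_0\{a_n\}=0,a_0,a_1,a_2,\dots$, and $I_0^{j}$ denotes $j$-fold application. The left integral is $\mathcal{I}_L^0\{a_n\}=\{\sum_{k=0}^{n-1}a_k\}$ (empty sum $=0$). Define $\{a_n[x^0/0!]\}_L=\{1\}=1,1,1,\dots$, $\{a_n[x^1/1!]\}_L=\{n\}=0,1,2,\dots$, and for $k\ge 2$, $\{a_n[x^k/k!]\}_L=(\mathcal{I}_L^0)^{k-1}\{n\}$ (the $(k-1)$-fold left integral of $0,1,2,\dots$). *)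

(* Defs.v *)
From mathcomp Require Import all_boot.
Set Implicit Arguments. Unset Strict Implicit. Unset Printing Implicit Defensive.

Definition sequence := nat -> nat.

Fixpoint fib (n : nat) : nat :=
  match n with
  | 0 => 0
  | 1 => 1
  | (m.+1 as p).+1 => fib p + fib m
  end.

Definition I0 (a : sequence) : sequence :=
  fun n => match n with 0 => 0 | m.+1 => a m end.

Definition IL (a : sequence) : sequence := fun n => \sum_(k < n) a k.

(* {a_n[x^k/k!]}_L *)
Definition aL (k : nat) : sequence :=
  match k with
  | 0 => fun _ => 1
  | j.+1 => iter j IL (fun n => n)
  end.

Definition summand (k : nat) : sequence := iter k.+1 I0 (aL k).

(* Main.v *)
Require Import Defs.
From mathcomp Require Import all_boot.

Lemma iterI0 m a n : iter m I0 a n = if m <= n then a (n - m) else 0.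
Proof.
elim: m n => [|m IH] n /=; first by rewrite subn0.
case: n => [|n] //=; by rewrite IH subSS.
Qed.

Lemma hockey j n : \sum_(k < n) 'C(k, j.+1) = 'C(n, j.+2).
Proof.
elim: n => [|n IH]; first by rewrite big_ord0.
by rewrite big_ord_recr /= IH [in RHS]binS addnC.
Qed.

Lemma aLE k n : aL k n = 'C(n, k).
Proof.
case: k => [|j] /=; first by rewrite bin0.
elim: j n => [|j IH] n /=; first by rewrite bin1.
rewrite /IL. under eq_bigr => i _ do rewrite IH. by rewrite hockey.
Qed.

Lemma summandE k n : summand k n = if k < n then 'C(n - k.+1, k) else 0.
Proof. by rewrite /summand iterI0 aLE. Qed.

Definition T n := \sum_(k < n.+1) 'C(n - k, k).

Lemma fibT n : fib n.+1 = T n /\ fib n.+2 = T n.+1.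
Proof.
elim: n => [|n [IH1 IH2]].
  by split; rewrite /T !big_ord_recr big_ord0.
split=> //.
have -> : fib n.+3 = fib n.+2 + fib n.+1 by []. rewrite IH1 IH2.
symmetry; rewrite /T big_ord_recl subn0 bin0.
have E : forall k : 'I_(n.+2), 'C(n.+2 - (bump 0 k), bump 0 k) =
   'C(n - k, k.+1) + 'C(n - k, k).
  move=> [k /= hk]; rewrite /bump /= add1n subSS.
  case: (leqP k n) => hkn.
    by rewrite subSn // binS.
  have -> : k = n.+1 by apply/eqP; rewrite eqn_leq -ltnS hk hkn.
  by rewrite subnn (_ : n - n.+1 = 0) ?bin0n // subnS subnn.
under eq_bigr => i _ do rewrite E.
rewrite big_split /= addnA.
rewrite [in X in _ + X = _]big_ord_recr /= (_ : n - n.+1 = 0) ?bin0n ?addn0; last by rewrite subnS subnn.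
congr (_ + _).
rewrite [in RHS]big_ord_recl subn0 bin0 /=; congr (_ + _).
rewrite big_ord_recr /= (_ : n - n.+1 = 0) ?bin0n ?addn0; last by rewrite subnS subnn.
apply: eq_bigr => i _; by rewrite /bump /= add1n subSS.
Qed.

Theorem mainTheorem3 :
  forall n : nat,
    (forall k : nat, n <= k -> summand k n = 0) /\
    fib n = \sum_(k < n) summand k n.
Proof.
move=> n; split.
  by move=> k hk; rewrite summandE ltnNge hk.
case: n => [|n]; first by rewrite big_ord0.
have [-> _] := fibT n.
apply: eq_bigr => [[k hk]] _ /=.
by rewrite summandE hk subSS.
Qed.
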